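(* Let $h:\mathbb{R}_{\geq0}\times\mathbb{R}^n\to\mathbb{R}_{\geq0}$ be continuous and $K\subset\mathbb{R}^n$ closed. Assume (i) $h$ is positive definite with respect to $K$ uniformly in $t$: for all $t\ge0$ and $x\in\mathbb{R}^n$, $h(t,x)=0$ if and only if $x\in K$; (ii) $t\mapsto h(t,x)$ is nonincreasing for each $x\in\mathbb{R}^n$. Then for every compact set $\mathcal{I}\subset\mathbb{R}^n$ with $\mathcal{I}\cap K=\emptyset$ there exists a continuous $g:\mathbb{R}_{\geq0}\times\mathcal{I}\to\mathbb{R}_{\geq0}$ such that (1) $g$ is of class $\mathcal{C}^1$ on $\mathbb{R}_{\geq0}\times\operatorname{int}(\mathcal{I})$; (2) $\tfrac12 h(t,x)\le g(t,x)\le 2h(t,x)$ for all $(t,x)\in\mathbb{R}_{\geq0}\times\mathcal{I}$; (3) $t\mapsto g(t,x)$ is nonincreasing for each $x\in\mathcal{I}$. *)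

(* Defs.v *)
From HB Require Import structures.
From mathcomp Require Import all_boot all_order all_algebra.
From mathcomp Require Import all_classical all_reals all_analysis.
Set Implicit Arguments. Unset Strict Implicit. Unset Printing Implicit Defensive.
Import Order.TTheory GRing.Theory Num.Theory.
Import numFieldNormedType.Exports.
Local Open Scope classical_set_scope.
Local Open Scope ring_scope.

(* f : V -> R is of class C^1 on the open set U: differentiable at every
   point of U, and every directional derivative z |-> 'D_v f z is continuous
   on U (in finite dimension this is equivalent to continuity of z |-> 'd f z). *)
Definition C1_open {R : realType} {V : normedModType R} (U : set V) (f : V -> R) :=
  [/\ open U,
      (forall z, U z -> differentiable f z) &
      (forall v : V, forall z, U z -> {for z, continuous (fun w => 'D_v f w)})].

(* f, only meaningful on the (possibly non-open) set S, is of class C^1 on S: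
   it agrees on S with a function that is C^1 on an open neighbourhood of S. *)
Definition C1_on {R : realType} {V : normedModType R} (S : set V) (f : V -> R) :=
  exists (U : set V) (F : V -> R),
    [/\ C1_open U F, S `<=` U & (forall z, S z -> F z = f z)].

(* Main.v *)
Require Import Defs.
From HB Require Import structures.
From mathcomp Require Import all_boot all_order all_algebra.
From mathcomp Require Import all_classical all_reals all_analysis.
From mathcomp Require Import ring lra finmap.
Import Order.TTheory GRing.Theory Num.Theory.
Import numFieldNormedType.Exports.
Local Open Scope classical_set_scope.
Local Open Scope ring_scope.

Set Implicit Arguments. Unset Strict Implicit. Unset Printing Implicit Defensive.

Section C1.
Context {R : realType} {V : normedModType R}.

Definition C1g (f : V -> R) :=
  (forall w, differentiable f w) /\ (forall v, continuous (fun w => 'D_v f w)).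

Lemma C1g_cont f : C1g f -> continuous f.
Proof. by move=> [df _] w; apply: differentiable_continuous. Qed.

Lemma C1g_cst (a : R) : C1g (fun _ => a).
Proof.
split=> [w|v]; first exact: differentiable_cst.
have -> : (fun w => 'D_v (fun _ : V => a) w) = fun _ => 0.
  by apply/funext => w; exact: (derive_cst a).
exact: cst_continuous.
Qed.

Lemma C1g_add f g : C1g f -> C1g g -> C1g (fun w => f w + g w).
Proof.
move=> [df cf] [dg cg]; split=> [w|v].
  exact: (differentiableD (df w) (dg w)).
have -> : (fun w => 'D_v (fun w => f w + g w) w) = fun w => 'D_v f w + 'D_v g w.
  apply/funext => w.
  exact: (deriveD (diff_derivable (v:=v) (df w)) (diff_derivable (v:=v) (dg w))).
by move=> w; have := continuousD (cf v w) (cg v w); exact.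
Qed.

Lemma C1g_mul f g : C1g f -> C1g g -> C1g (fun w => f w * g w).
Proof.
move=> [df cf] [dg cg]; split=> [w|v].
  exact: (differentiableM (df w) (dg w)).
have -> : (fun w => 'D_v (fun w => f w * g w) w) =
   fun w => f w * 'D_v g w + g w * 'D_v f w.
  apply/funext => w.
  exact: (deriveM (diff_derivable (v:=v) (df w)) (diff_derivable (v:=v) (dg w))).
move=> w; have cf0 := C1g_cont (conj df cf); have cg0 := C1g_cont (conj dg cg).
have := continuousD (continuousM (cf0 w) (cg v w)) (continuousM (cg0 w) (cf v w)).
exact.
Qed.

Lemma C1g_inv f : C1g f -> (forall w, f w != 0) -> C1g (fun w => (f w)^-1).
Proof.
move=> [df cf] f0; split=> [w|v].
  exact: (differentiableV (df w) (f0 w)).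
have -> : (fun w => 'D_v (fun w => (f w)^-1) w) =
   fun w => - ((f w * f w)^-1) * 'D_v f w.
  apply/funext => w.
  rewrite -expr2.
  exact: (deriveV (f0 w) (diff_derivable (v:=v) (df w))).
move=> w; have cf0 := C1g_cont (conj df cf).
have h1 := continuousM (cf0 w) (cf0 w).
have h2 := @continuousV _ _ (f \* f) w (mulf_neq0 (f0 w) (f0 w)) h1.
have := continuousM (continuousN h2) (cf v w). exact.
Qed.

End C1.

Section C1b.
Context {R : realType}.

Lemma C1g_comp_lin {V W : normedModType R} (L : {linear V -> W}) (f : W -> R) :
  continuous L -> C1g f -> C1g (fun w => f (L w)).
Proof.
move=> cL [df cf]; split=> [w|v].
  have dL : differentiable L w by exact: linear_differentiable.
  exact: (differentiable_comp dL (df (L w))).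
have -> : (fun w => 'D_v (fun w => f (L w)) w) = fun w => 'D_(L v) f (L w).
  apply/funext => w.
  have dL : differentiable L w by exact: linear_differentiable.
  have dc : differentiable (f \o L) w by exact: (differentiable_comp dL (df (L w))).
  rewrite (deriveE v dc) (diff_comp dL (df (L w))) /= (deriveE _ (df (L w))).
  by rewrite (diff_lin w cL).
by move=> w; have := continuous_comp (cL w) (cf (L v) (L w)); exact.
Qed.

Lemma C1g_sum {V : normedModType R} (I : Type) (s : seq I) (F : I -> V -> R) :
  (forall i, C1g (F i)) -> C1g (fun w => \sum_(i <- s) F i w).
Proof.
move=> FC; elim: s => [|i s IH].
  have -> : (fun w : V => \sum_(i <- [::]) F i w) = fun _ => 0.
    by apply/funext => w; rewrite big_nil.
  exact: C1g_cst.
have -> : (fun w : V => \sum_(j <- i :: s) F j w) =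
    fun w => F i w + \sum_(j <- s) F j w.
  by apply/funext => w; rewrite big_cons.
exact: C1g_add.
Qed.

Lemma C1g_prod {V : normedModType R} (I : Type) (s : seq I) (F : I -> V -> R) :
  (forall i, C1g (F i)) -> C1g (fun w => \prod_(i <- s) F i w).
Proof.
move=> FC; elim: s => [|i s IH].
  have -> : (fun w : V => \prod_(i <- [::]) F i w) = fun _ => 1.
    by apply/funext => w; rewrite big_nil.
  exact: C1g_cst.
have -> : (fun w : V => \prod_(j <- i :: s) F j w) =
    fun w => F i w * \prod_(j <- s) F j w.
  by apply/funext => w; rewrite big_cons.
exact: C1g_mul.
Qed.

Lemma C1g_R (phi dphi : R -> R) : (forall s, derivable phi s 1) ->
  (forall s, 'D_1 phi s = dphi s) -> continuous dphi -> C1g phi.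
Proof.
move=> dp Dp cd.
have dif : forall s, differentiable phi s by move=> s; apply/derivable1_diffP.
split=> // v.
have -> : (fun w => 'D_v phi w) = fun w => v * dphi w.
  apply/funext => w; rewrite (deriveE v (dif w)) (diff1E (dif w)) /=.
  by rewrite derive1E Dp.
by move=> w; have := continuousM (@cst_continuous _ _ v w) (cd w); exact.
Qed.

Lemma C1g_id : C1g (fun s : R => s).
Proof.
apply: (@C1g_R _ (fun _ => 1)) => [s|s|].
- exact: derivable_id.
- exact: derive_id.
- exact: cst_continuous.
Qed.

Lemma C1g_comp {V : normedModType R} (phi : R -> R) (f : V -> R) :
  C1g phi -> C1g f -> C1g (fun w => phi (f w)).
Proof.
move=> [dp cp] [df cf]; split=> [w|v].
  exact: (differentiable_comp (df w) (dp (f w))).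
have -> : (fun w => 'D_v (fun w => phi (f w)) w) = fun w => 'D_v f w * 'D_1 phi (f w).
  apply/funext => w.
  have dc : differentiable (phi \o f) w by exact: (differentiable_comp (df w) (dp (f w))).
  rewrite (deriveE v dc) (diff_comp (df w) (dp (f w))) /= (diff1E (dp (f w))) /=.
  by rewrite -(deriveE v (df w)) derive1E.
move=> w; have cf0 := C1g_cont (conj df cf).
have := continuousM (cf v w) (continuous_comp (cf0 w) (cp 1 (f w))); exact.
Qed.

End C1b.

Section Lins.
Context {R : realType}.

Lemma C1g_fst {U W : normedModType R} (f : U -> R) :
  C1g f -> C1g (fun z : U * W => f z.1).
Proof.
move=> Cf.
have lin : linear (fst : U * W -> U) by [].
pose L : {linear (U * W)%type -> U} := HB.pack (fst : U * W -> U) (GRing.isLinear.Build _ _ _ _ _ lin).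
have cL : continuous L by move=> z; exact: cvg_fst.
exact: (C1g_comp_lin cL Cf).
Qed.

Lemma C1g_snd {U W : normedModType R} (f : W -> R) :
  C1g f -> C1g (fun z : U * W => f z.2).
Proof.
move=> Cf.
have lin : linear (snd : U * W -> W) by [].
pose L : {linear (U * W)%type -> W} := HB.pack (snd : U * W -> W) (GRing.isLinear.Build _ _ _ _ _ lin).
have cL : continuous L by move=> z; exact: cvg_snd.
exact: (C1g_comp_lin cL Cf).
Qed.

Lemma C1g_coord (n : nat) (k : 'I_n) : C1g (fun x : 'rV[R]_n => x ord0 k).
Proof.
have lin : linear (fun x : 'rV[R]_n => x ord0 k).
  by move=> a x y; rewrite !mxE.
pose L : {linear 'rV[R]_n -> R} := HB.pack (fun x : 'rV[R]_n => x ord0 k)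
   (GRing.isLinear.Build _ _ _ _ _ lin).
have cL : continuous L by move=> z; exact: coord_continuous.
exact: (C1g_comp_lin cL C1g_id).
Qed.

End Lins.

Section Bump.
Context {R : realType}.

Definition pp (s : R) := Num.max s 0.
Definition AA (s : R) := pp s * pp s.

Lemma pp_cont : continuous pp.
Proof.
move=> s; have := @continuous_max R R id (fun _ => 0) s (@cvg_id _ (nbhs s))
   (@cst_continuous R R 0 s); exact.
Qed.

Lemma pp_ge0 s : 0 <= pp s.
Proof. by rewrite /pp le_max lexx orbT. Qed.

Lemma pp_pos s : 0 < s -> pp s = s.
Proof. by move=> s0; rewrite /pp max_l // ltW. Qed.

Lemma pp_neg s : s <= 0 -> pp s = 0.
Proof. by move=> s0; rewrite /pp max_r. Qed.

Lemma AA_gt0 s : 0 < s -> 0 < AA s.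
Proof. by move=> s0; rewrite /AA pp_pos // mulr_gt0. Qed.

Lemma AA_ge0 s : 0 <= AA s.
Proof. by rewrite /AA mulr_ge0 // pp_ge0. Qed.

Lemma AA_le0 s : s <= 0 -> AA s = 0.
Proof. by move=> s0; rewrite /AA pp_neg // mul0r. Qed.

Lemma AA_gt0P s : (0 < AA s) = (0 < s).
Proof.
apply/idP/idP; last exact: AA_gt0.
by case: (ltP 0 s) => // s0; rewrite AA_le0 // ltxx.
Qed.

Lemma AA_mono s t : s <= t -> AA s <= AA t.
Proof.
move=> st; have ps : pp s <= pp t.
  case: (leP s 0) => s0; first by rewrite pp_neg // pp_ge0.
  by rewrite !pp_pos // (lt_le_trans s0 st).
by rewrite /AA; apply: ler_pM; rewrite ?pp_ge0.
Qed.

Lemma AA_deriv s : derivable AA s 1 /\ 'D_1 AA s = 2 * pp s.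
Proof.
case: (ltgtP s 0) => [sneg|spos|->].
- have e : \forall x \near s, (fun _ => 0 : R) x = AA x.
    by near=> x; rewrite AA_le0 // ltW //; near: x; exact: lt_nbhsl.
  split; first exact: (near_eq_derivable e (derivable_cst _ _ _)).
  by rewrite -(near_eq_derive _ e) derive_cst pp_neg ?mulr0 // ltW.
- have e : \forall x \near s, (fun x => x * x) x = AA x.
    by near=> x; rewrite /AA pp_pos //; near: x; exact: lt_nbhsr.
  have d1 : derivable (fun x : R => x) s 1 by exact: derivable_id.
  have dm : derivable (fun x : R => x * x) s 1 by exact: (derivableM d1 d1).
  split; first exact: (near_eq_derivable e dm).
  rewrite -(near_eq_derive _ e) (deriveM d1 d1) derive_id pp_pos //.
  change (s * 1 + s * 1 = 2 * s); by rewrite mulr1 -mulr2n mulr_natl.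
- have key : (fun h : R => h^-1 *: ((AA \o shift 0) (h *: 1) - AA 0)) @ 0^' --> (0 : R).
    have e : {near (0 : R)^', pp =1 (fun h : R => h^-1 *: ((AA \o shift 0) (h *: 1) - AA 0))}.
      near=> h; rewrite /=.
      change (pp h = h^-1 * (AA (h * 1 + 0) - AA 0)).
      rewrite mulr1 addr0 (AA_le0 (lexx 0)) subr0 /AA.
      have hn0 : h != 0 by near: h; exact: nbhs_dnbhs_neq.
      case: (ltP 0 h) => h0.
        by rewrite pp_pos // mulKf.
      by rewrite pp_neg // !mulr0.
    apply: cvg_trans; first exact: (near_eq_cvg e).
    have h0 : pp 0 = 0 by rewrite pp_neg.
    have c0 : pp @ (0:R) --> (0:R).
      have := @pp_cont 0; rewrite /continuous_at [X in _ --> X]pp_neg //.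
    exact: (cvg_within_filter _ c0).
  split; first by apply/cvg_ex; exists 0.
  rewrite /derive; rewrite (cvg_lim _ key) //.
  by rewrite pp_neg // mulr0.
Unshelve. all: by end_near.
Qed.

Lemma C1g_AA : C1g AA.
Proof.
apply: (@C1g_R _ AA (fun s => 2 * pp s)).
- by move=> s; case: (AA_deriv s).
- by move=> s; case: (AA_deriv s).
- move=> s; have := continuousM (@cst_continuous R R 2 s) (@pp_cont s); exact.
Qed.

End Bump.

Section C1c.
Context {R : realType} {V : normedModType R}.

Lemma C1g_opp (f : V -> R) : C1g f -> C1g (fun w => - f w).
Proof.
move=> Cf.
have -> : (fun w => - f w) = fun w => (fun _ => -1) w * f w.
  by apply/funext => w; rewrite mulN1r.
exact: (C1g_mul (C1g_cst _) Cf).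
Qed.

Lemma C1g_sub (f g : V -> R) : C1g f -> C1g g -> C1g (fun w => f w - g w).
Proof. by move=> Cf Cg; apply: C1g_add => //; exact: C1g_opp. Qed.

Lemma C1g_sqr (f : V -> R) : C1g f -> C1g (fun w => f w ^+ 2).
Proof.
move=> Cf; have -> : (fun w => f w ^+ 2) = fun w => f w * f w.
  by apply/funext => w; rewrite expr2.
exact: C1g_mul.
Qed.

Lemma C1g_div (f g : V -> R) : C1g f -> C1g g -> (forall w, g w != 0) ->
  C1g (fun w => f w / g w).
Proof. by move=> Cf Cg g0; apply: C1g_mul => //; exact: C1g_inv. Qed.

End C1c.

Section Local.
Context {R : realType} {V : normedModType R}.

Lemma loc0_fact (d : V -> R) x : (\forall w \near x, d w = 0) ->
  continuous (0 : V -> R) /\ d \o shift x = cst (d x) + \0 +o_ 0 id.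
Proof.
move=> dn; split; first exact: cst_continuous.
apply/eqaddoP => _/posnumP[eps].
have sh : (fun y : V => y + x) @ (0 : V) --> x.
  have := @cvgD _ _ _ (nbhs (0:V)) _ (fun y : V => y) (fun _ => x) 0 x cvg_id (cvg_cst x).
  rewrite add0r; exact.
have := sh _ dn; rewrite /= => dn0.
near=> y.
have dx : d x = 0 by exact: (nbhs_singleton dn).
have -> : (d \o shift x - (cst (d x) + \0)) y = 0.
  rewrite dx.
  change (d (y + x) - (0 + 0) = 0).
  have -> : d (y + x) = 0 by near: y.
  by rewrite !addr0 subr0.
by rewrite normr0 mulr_ge0.
Unshelve. all: by end_near.
Qed.

Lemma near_eq_differentiable (f F : V -> R) x :
  (\forall w \near x, f w = F w) -> differentiable F x -> differentiable f x.
Proof.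
move=> e dF.
pose d := fun w => f w - F w.
have dn : \forall w \near x, d w = 0 by near=> w; rewrite /d (near e w) // subrr.
have dd : differentiable d x.
  have [c eq] := loc0_fact dn.
  have dz : 'd d x = \0 :> (V -> R) by apply/diff_unique.
  by apply/diff_locallyP; rewrite dz.
have -> : f = F + d by apply/funext => w; rewrite /d /= addrC subrK.
exact: differentiableD.
Unshelve. all: by end_near.
Qed.

Lemma C1_local (U : set V) (f : V -> R) : open U ->
  (forall z, U z -> exists F, C1g F /\ \forall w \near z, f w = F w) ->
  [/\ open U, (forall z, U z -> differentiable f z) &
     (forall v z, U z -> {for z, continuous (fun w => 'D_v f w)})].
Proof.
move=> oU loc; split => // [z Uz|v z Uz].
  have [F [[dF _] e]] := loc z Uz.
  exact: (near_eq_differentiable e (dF z)).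
have [F [[dF cF] e]] := loc z Uz.
have ee : \forall w \near z, 'D_v f w = 'D_v F w.
  have nn : \forall w \near z, \forall w' \near w, f w' = F w'.
    have [B [oB Bz] BP] : exists2 B : set V, open_nbhs z B & B `<=` (fun w => f w = F w).
      by have := e; rewrite /prop_near1 nbhsE.
    apply: (@filterS _ _ _ B); last exact: open_nbhs_nbhs.
    by move=> w Bw; apply: (filterS BP); exact: open_nbhs_nbhs.
  by apply: filterS nn => w ew; exact: near_eq_derive.
have ez : 'D_v f z = 'D_v F z by exact: (nbhs_singleton ee).
have c1 : (fun w => 'D_v F w) @ z --> 'D_v f z by rewrite ez; exact: cF.
have ee' : \forall w \near z, 'D_v F w = 'D_v f w by apply: filterS ee.
exact: (cvg_trans (near_eq_cvg ee') c1).
Qed.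

End Local.

Section Approx.
Context {R : realType} {n : nat}.
Implicit Types (c x : 'rV[R]_n) (r : R).

Definition bump c r x := \prod_(k < n) AA (r ^+ 2 - (x ord0 k - c ord0 k) ^+ 2).
Definition ebump c r x := \sum_(k < n) AA ((x ord0 k - c ord0 k) ^+ 2 - r ^+ 2 / 4).

Lemma ballP c r x : ball c r x <-> 0 < r /\ forall k, `|c ord0 k - x ord0 k| < r.
Proof.
split.
  by case=> r0 h; split => // k; have := h ord0 k.
case=> r0 h; split => // i j; have -> : i = ord0 by apply/val_inj; case: i => [[]].
exact: h.
Qed.

Lemma bump_ge0 c r x : 0 <= bump c r x.
Proof. by apply: prodr_ge0 => k _; exact: AA_ge0. Qed.

Lemma bump_gt0 c r x : 0 < r -> (0 < bump c r x <-> ball c r x).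
Proof.
move=> r0; split.
  move=> bp; apply/ballP; split => // k.
  have : AA (r ^+ 2 - (x ord0 k - c ord0 k) ^+ 2) != 0.
    move: bp; rewrite lt0r => /andP[+ _].
    by move/prodf_neq0 => /(_ k isT).
  move=> h.
  have h2 : 0 < r ^+ 2 - (x ord0 k - c ord0 k) ^+ 2.
    by rewrite -AA_gt0P lt0r h AA_ge0.
  rewrite distrC ltr_norml; apply/andP; split; nra.
move=> /ballP [_ h]; apply: prodr_gt0 => k _; rewrite AA_gt0P.
have := h k; rewrite distrC ltr_norml => /andP[h1 h2]; nra.
Qed.

Lemma ebump_ge0 c r x : 0 <= ebump c r x.
Proof. by apply: sumr_ge0 => k _; exact: AA_ge0. Qed.

Lemma ebump0_ball c r x : 0 < r -> ebump c r x = 0 -> ball c r x.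
Proof.
move=> r0 e0; apply/ballP; split => // k.
have := @psumr_eq0P _ _ _ _ (fun k _ => AA_ge0 _) e0 k isT => ak.
have : ~ (0 < (x ord0 k - c ord0 k) ^+ 2 - r ^+ 2 / 4).
  by rewrite -AA_gt0P ak ltxx.
move=> /negP; rewrite -leNgt => hk.
rewrite distrC ltr_norml; apply/andP; split; nra.
Qed.

Lemma ball_ebump0 c r x : 0 < r -> ball c (r / 2) x -> ebump c r x = 0.
Proof.
move=> r0 /ballP [_ h]; apply: big1 => k _; apply: AA_le0.
have := h k; rewrite distrC ltr_norml => /andP[h1 h2]; nra.
Qed.

Lemma C1g_bump c r : C1g (bump c r).
Proof.
rewrite /bump; apply: C1g_prod => k.
apply: (C1g_comp C1g_AA); apply: C1g_sub; first exact: C1g_cst.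
apply: C1g_sqr; apply: C1g_sub; first exact: C1g_coord.
exact: C1g_cst.
Qed.

Lemma C1g_ebump c r : C1g (ebump c r).
Proof.
rewrite /ebump; apply: C1g_sum => k.
apply: (C1g_comp C1g_AA); apply: C1g_sub; last exact: C1g_cst.
apply: C1g_sqr; apply: C1g_sub; first exact: C1g_coord.
exact: C1g_cst.
Qed.

End Approx.

Section Approx2.
Context {R : realType} {n : nat}.

Lemma prod_seq_zero (s : seq 'rV[R]_n) (F : 'rV[R]_n -> R) c :
  c \in s -> F c = 0 -> \prod_(i <- s) F i = 0.
Proof. by move=> cs Fc; rewrite (big_rem c cs) /= Fc mul0r. Qed.

Lemma approx_x (H : 'rV[R]_n -> R) (I : set 'rV[R]_n) (eps : R) :
  compact I -> (forall x, I x -> 0 < H x) ->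
  (forall c, I c -> forall e, 0 < e -> \forall x \near c, `|H x - H c| < e) ->
  0 < eps -> eps <= 1 ->
  exists p : 'rV[R]_n -> R, C1g p /\
    (forall x, I x -> (1 - eps) * H x <= p x /\ p x <= (1 + eps) * H x).
Proof.
move=> cI Hpos Hc e0 e1.
have rad : forall c, exists r : R, I c -> 0 < r /\
    (forall x, ball c r x -> `|H x - H c| < eps / 2 * H c).
  move=> c; case: (pselect (I c)) => Ic; last by exists 1.
  have ep : 0 < eps / 2 * H c by rewrite mulr_gt0 ?divr_gt0 // Hpos.
  have /nbhs_ballP [r r0 hr] := Hc c Ic _ ep.
  by exists r => _; split => // x bx; exact: hr.
have [rho hrho] := choice rad.
have cov : I `<=` \bigcup_(c in I) ball c (rho c / 2).
  move=> x Ix; exists x => //; apply: ballxx.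
  by have [r0 _] := hrho x Ix; rewrite divr_gt0.
rewrite compact_cover in cI.
have [D sD covD] := cI _ I (fun c => ball c (rho c / 2)) (fun c _ => ball_open _ _) cov.
have DI : forall c, c \in D -> I c.
  by move=> c /sD /set_mem.
pose zeta x := \prod_(c <- D) ebump c (rho c) x.
pose num x := \sum_(c <- D) bump c (rho c) x * H c.
pose sb x := \sum_(c <- D) bump c (rho c) x.
pose den x := sb x + zeta x.
have sb_ge0 : forall x, 0 <= sb x by move=> x; apply: sumr_ge0 => c _; exact: bump_ge0.
have zeta_ge0 : forall x, 0 <= zeta x.
  by move=> x; apply: prodr_ge0 => c _; exact: ebump_ge0.
have den_gt0 : forall x, 0 < den x.
  move=> x; case: (ltP 0 (zeta x)) => z0.
    by rewrite /den ltr_wpDl.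
  have zx : zeta x = 0 by apply/eqP; rewrite eq_le z0 zeta_ge0.
  have : has (fun c => true && (ebump c (rho c) x == 0)) D.
    by rewrite -prodf_seq_eq0; apply/eqP.
  move=> /hasP [c cD /= /eqP ec].
  have [r0 _] := hrho c (DI c cD).
  have bc : 0 < bump c (rho c) x by apply/(bump_gt0 _ _ r0); exact: ebump0_ball.
  rewrite /den zx addr0 /sb (big_rem c cD) /=.
  apply: ltr_wpDr => //; apply: sumr_ge0 => i _; exact: bump_ge0.
exists (fun x => num x / den x); split.
  apply: C1g_div; last by move=> w; rewrite gt_eqF.
  - rewrite /num; apply: C1g_sum => c; apply: C1g_mul; first exact: C1g_bump.
    exact: C1g_cst.
  - rewrite /den /sb /zeta; apply: C1g_add.
      by apply: C1g_sum => c; exact: C1g_bump.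
    by apply: C1g_prod => c; exact: C1g_ebump.
move=> x Ix.
have [c cD bc] := covD x Ix.
have [rc0 _] := hrho c (DI c cD).
have zx : zeta x = 0.
  by apply: (prod_seq_zero cD); exact: ball_ebump0.
have sbp : 0 < sb x.
  rewrite /sb (big_rem c cD) /=; apply: ltr_wpDr.
    by apply: sumr_ge0 => i _; exact: bump_ge0.
  by apply/(bump_gt0 _ _ rc0); apply: (le_ball _ bc); rewrite ler_pdivrMr // ler_peMr // ?ler1n // ltW.
have dx : den x = sb x by rewrite /den zx addr0.
have Hx := Hpos x Ix.
have term : forall i, i \in D ->
   (1 - eps) * H x * bump i (rho i) x <= bump i (rho i) x * H i /\
   bump i (rho i) x * H i <= (1 + eps) * H x * bump i (rho i) x.
  move=> i iD; have [ri0 hri] := hrho i (DI i iD).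
  have Hi := Hpos i (DI i iD).
  have b0 := bump_ge0 i (rho i) x.
  case: (ltP 0 (bump i (rho i) x)) => bp; last first.
    have -> : bump i (rho i) x = 0 by apply/eqP; rewrite eq_le bp b0.
    by rewrite !mulr0 mul0r.
  have := hri x (proj1 (bump_gt0 _ _ ri0) bp).
  rewrite ltr_norml => /andP[h1 h2].
  have l1 : (1 - eps) * H x <= H i by nra.
  have l2 : H i <= (1 + eps) * H x by nra.
  by split; rewrite [X in _ <= X]mulrC; [rewrite ler_pM2r|rewrite ler_pM2l].
rewrite dx; split.
  rewrite ler_pdivlMr // /num /sb mulr_sumr; rewrite big_seq_cond [X in _ <= X]big_seq_cond.
  by apply: ler_sum => i /andP[iD _]; case: (term i iD).
rewrite ler_pdivrMr // /num /sb mulr_sumr; rewrite big_seq_cond [X in _ <= X]big_seq_cond.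
by apply: ler_sum => i /andP[iD _]; case: (term i iD).
Qed.

End Approx2.

Section Mesh.
Context {R : realType}.

Lemma within_near {T : topologicalType} (A : set T) (f : T -> R) z0 :
  {within A, continuous f} -> A z0 -> forall e, 0 < e ->
  \forall z \near z0, A z -> `|f z - f z0| < e.
Proof.
move=> hc Az0 e e0.
have := hc z0; rewrite /continuous_at => /cvgr_dist_lt /(_ e e0).
have E : nbhs (z0 : subspace A) = within A (nbhs z0).
  by rewrite nbhs_subspace_in.
rewrite E /from_subspace => h.
have h' : \forall z \near z0, A z -> `|f z0 - f z| < e := h.
by apply: filterS h' => z hz Az; rewrite distrC; exact: hz.
Qed.

Context {n : nat}.

Lemma slice_near (h : R -> 'rV[R]_n -> R) tau c :
  {within [set z : R * 'rV[R]_n | 0 <= z.1], continuous (fun z => h z.1 z.2)} ->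
  0 <= tau -> forall e, 0 < e -> \forall x \near c, `|h tau x - h tau c| < e.
Proof.
move=> hc t0 e e0.
have := within_near hc (z0 := (tau, c)) t0 e0.
move=> /nbhs_ballP [r r0 hr]; apply/nbhs_ballP; exists r => // x bx.
by apply: (hr (tau, x)) => //; split => //=; exact: ballxx.
Qed.

End Mesh.

Section Mesh2.
Context {R : realType} {n : nat}.

Lemma mesh_delta (h : R -> 'rV[R]_n -> R) (I : set 'rV[R]_n) (k : R) :
  {within [set z : R * 'rV[R]_n | 0 <= z.1], continuous (fun z => h z.1 z.2)} ->
  (forall t x, 0 <= t -> I x -> 0 < h t x) -> compact I -> 0 <= k ->
  exists d : R, 0 < d /\ forall s s' x, k <= s -> s <= k + 1 -> s <= s' ->
     s' <= s + d -> I x -> 2/3 * h s x <= h s' x.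
Proof.
move=> hc hpos cI k0.
pose H := fun z : R * 'rV[R]_n => h z.1 z.2.
pose C := `[k, k + 1] `*` I.
have cC : compact C by apply: compact_setX => //; exact: segment_compact.
have nc := (near_covering_withinP C).2 ((compact_near_coveringP C).1 cC).
pose P := fun (d : R) (z : R * 'rV[R]_n) =>
  forall s', z.1 <= s' -> s' <= z.1 + d -> 2/3 * h z.1 z.2 <= h s' z.2.
have key : forall z0, C z0 -> \forall z \near z0 & d \near (0:R)^'+, C z -> P d z.
  move=> [t0 x0] [/= t0i Ix0].
  have t00 : 0 <= t0.
    by move: t0i; rewrite in_itv /= => /andP[+ _]; exact: le_trans.
  have H0 : 0 < H (t0, x0) by exact: hpos.
  have e0 : 0 < H (t0, x0) / 10 by rewrite divr_gt0.
  have := within_near hc (z0 := (t0, x0)) t00 e0.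
  move=> /nbhs_ballP [r r0 hr].
  have r20 : 0 < r / 2 by rewrite divr_gt0.
  exists (ball (t0, x0) (r / 2), [set d : R | d < r / 2]).
    split => /=; first exact: nbhsx_ballx.
    exact: nbhs_right_lt.
  move=> [[t x] d] /= [bz dr] [/= ti Ix] s' ts' s'd.
  rewrite /= in ts' s'd dr.
  have t0' : 0 <= t by move: ti; rewrite in_itv /= => /andP[+ _]; exact: le_trans.
  have [bt bx] := bz.
  have hz : `|H (t, x) - H (t0, x0)| < H (t0, x0) / 10.
    by apply: (hr (t, x)) => //; apply: (le_ball _ bz); lra.
  have hs : `|H (s', x) - H (t0, x0)| < H (t0, x0) / 10.
    apply: (hr (s', x)); last by rewrite /= (le_trans t0' ts').
    split => /=; last by apply: (le_ball _ bx); lra.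
    move: bt; rewrite /ball /= => bt.
    have ts : `|t - s'| < r / 2 by rewrite distrC ger0_norm ?subr_ge0 //; lra.
    have tri : `|t0 - s'| <= `|t0 - t| + `|t - s'|.
      by have := ler_normD (t0 - t) (t - s'); rewrite addrA subrK.
    have bt2 : `|t0 - t| < r / 2 by exact: bt.
    change (`|t0 - s'| < r).
    lra.
  move: hz hs; rewrite /H /= !ltr_norml => /andP[a1 a2] /andP[b1 b2].
  lra.
have nP : \forall d \near (0:R)^'+, C `<=` P d.
  by apply: nc => //; exact: key.
have [d [d0 Pd]] := filter_ex (filterI (nbhs_right_gt (0:R)) nP).
exists d; split => // s s' x ks sk ss' s'd Ix.
have Cz : C (s, x) by split => //=; rewrite in_itv /= ks sk.
exact: (Pd (s, x) Cz s').
Qed.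

End Mesh2.

Unset Implicit Arguments. Set Strict Implicit.

Section Step.
Context {R : realType}.

Definition stp (u : R) := AA u / (AA u + AA (1 - u)).

Lemma stp_den (u : R) : 0 < AA u + AA (1 - u).
Proof.
have a1 := AA_ge0 u; have a2 := AA_ge0 (1 - u).
case: (ltP 0 u) => u0.
  by have := AA_gt0 u0; lra.
have : 0 < 1 - u by lra.
by move/AA_gt0; lra.
Qed.

Lemma stp0 (u : R) : u <= 0 -> stp u = 0.
Proof. by move=> u0; rewrite /stp AA_le0 // mul0r. Qed.

Lemma stp1 (u : R) : 1 <= u -> stp u = 1.
Proof.
move=> u1; have e : AA (1 - u) = 0 by apply: AA_le0; lra.
rewrite /stp e addr0 divff //.
by rewrite gt_eqF // AA_gt0 //; lra.
Qed.

Lemma stp_ge0 (u : R) : 0 <= stp u.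
Proof. by rewrite /stp divr_ge0 // ?AA_ge0 // ltW // stp_den. Qed.

Lemma stp_le1 (u : R) : stp u <= 1.
Proof.
rewrite /stp ler_pdivrMr ?stp_den // mul1r lerDl; exact: AA_ge0.
Qed.

Lemma stp_mono (u v : R) : u <= v -> stp u <= stp v.
Proof.
move=> uv; rewrite /stp ler_pdivrMr ?stp_den // mulrAC ler_pdivlMr ?stp_den //.
have a1 := AA_mono uv.
have a2 : AA (1 - v) <= AA (1 - u) by apply: AA_mono; lra.
have := ler_pM (AA_ge0 u) (AA_ge0 _) a1 a2 => h.
have b1 := AA_ge0 u; have b2 := AA_ge0 v.
rewrite !mulrDr; nra.
Qed.

Lemma C1g_stp : C1g stp.
Proof.
rewrite /stp; apply: C1g_div.
- exact: C1g_AA.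
- apply: C1g_add; first exact: C1g_AA.
  apply: (C1g_comp C1g_AA); apply: C1g_sub; [exact: C1g_cst|exact: C1g_id].
- by move=> u; rewrite gt_eqF // stp_den.
Qed.

Lemma tele (f : nat -> R) (i : nat) :
  \sum_(l < i) (f l - f l.+1) = f 0%N - f i.
Proof.
elim: i => [|i IH]; first by rewrite big_ord0 subrr.
by rewrite big_ord_recr /= IH addrA subrK.
Qed.

End Step.

Section Construction.
Context {R : realType} {n : nat} (h : R -> 'rV[R]_n -> R) (I : set 'rV[R]_n)
  (P : R * R -> 'rV[R]_n -> R) (M : nat -> nat).
Context (hmono : forall x t s, 0 <= t -> t <= s -> h s x <= h t x)
  (hpos : forall t x, 0 <= t -> I x -> 0 < h t x)
  (Pspec : forall tau e, 0 <= tau -> 0 < e -> e <= 1 -> C1g (P (tau, e)) /\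
     forall x, I x -> (1 - e) * h tau x <= P (tau, e) x /\ P (tau, e) x <= (1 + e) * h tau x)
  (Mspec : forall k i x, (i < (M k).+1)%N -> I x ->
     2/3 * h (k%:R + i%:R / (M k).+1%:R) x <= h (k%:R + i.+1%:R / (M k).+1%:R) x).

Definition NN k := (M k).+1.
Definition SS k := (\sum_(l < k) NN l)%N.
Definition aa (j : nat) : R := 4^-1 * (2^-1) ^+ j.
Definition Tm k i : R := k%:R + i%:R / (NN k)%:R.
Definition q k i x := (1 + aa (SS k + i)) * P (Tm k i, aa (SS k + i) / 8) x.
Definition sg k i (t : R) := stp (2 * (NN k)%:R * (t - k%:R) - 2 * i%:R - 2^-1).
Definition G k t x := q k 0 x - \sum_(i < NN k) sg k i t * (q k i x - q k i.+1 x).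
Definition g t x := G (Num.truncn t) t x.

Lemma aa_pos j : 0 < aa j.
Proof. by rewrite /aa mulr_gt0 // exprn_gt0. Qed.

Lemma aa_le j : aa j <= 4^-1.
Proof.
have e1 : (2^-1 : R) ^+ j <= 1 by apply: exprn_ile1; lra.
have e0 : 0 <= (2^-1 : R) ^+ j by apply: exprn_ge0; lra.
rewrite /aa; nra.
Qed.

Lemma aaS j : aa j.+1 = aa j / 2.
Proof. by rewrite /aa exprS mulrA [_ * 2^-1]mulrC -mulrA mulrC. Qed.

Lemma NN_gt0 k : (0 < (NN k)%:R :> R).
Proof. by rewrite ltr0n. Qed.

Lemma Tm_ge0 k i : 0 <= Tm k i.
Proof. by rewrite /Tm addr_ge0 // divr_ge0. Qed.

Lemma Tm_mono k i i' : (i <= i')%N -> Tm k i <= Tm k i'.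
Proof.
move=> ii; rewrite /Tm lerD2l ler_pM2r ?invr_gt0 ?NN_gt0 //.
by rewrite ler_nat.
Qed.

Lemma Tm0 k : Tm k 0 = k%:R.
Proof. by rewrite /Tm mul0r addr0. Qed.

Lemma TmN k : Tm k (NN k) = k%:R + 1.
Proof. by rewrite /Tm divff // gt_eqF // NN_gt0. Qed.

Lemma q_spec k i x : I x ->
  (1 + aa (SS k + i)) * (1 - aa (SS k + i) / 8) * h (Tm k i) x <= q k i x /\
  q k i x <= (1 + aa (SS k + i)) * (1 + aa (SS k + i) / 8) * h (Tm k i) x.
Proof.
move=> Ix; set a := aa (SS k + i).
have a0 : 0 < a by exact: aa_pos.
have a1 : a <= 4^-1 by exact: aa_le.
have [_ /(_ x Ix) [l u]] := Pspec _ _ (Tm_ge0 k i) (divr_gt0 a0 (ltr0n _ 8)) (ltac:(lra) : a / 8 <= 1).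
rewrite /q -/a; split; rewrite -mulrA; (apply: ler_wpM2l; [lra|]); [exact: l|exact: u].
Qed.

Lemma q_step k i x : (i < NN k)%N -> I x -> q k i.+1 x <= q k i x.
Proof.
move=> iN Ix.
have [l0 _] := q_spec k i x Ix.
have [_ u1] := q_spec k i.+1 x Ix.
rewrite addnS aaS in u1.
set a := aa (SS k + i) in l0 u1.
have a0 : 0 < a by exact: aa_pos.
have a1 : a <= 4^-1 by exact: aa_le.
have h0 := hpos _ _ (Tm_ge0 k i) Ix.
have h1 := hpos _ _ (Tm_ge0 k i.+1) Ix.
have h10 : h (Tm k i.+1) x <= h (Tm k i) x.
  by apply: hmono; [exact: Tm_ge0| apply: Tm_mono; exact: leqnSn].
apply: (le_trans u1); apply: le_trans l0.
have c1 : (1 + a / 2) * (1 + a / 2 / 8) <= (1 + a) * (1 - a / 8) by nra.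
have c0 : 0 <= (1 + a / 2) * (1 + a / 2 / 8) by nra.
apply: (le_trans (ler_wpM2l c0 h10)).
by apply: ler_wpM2r => //; exact: ltW.
Qed.

Lemma q_chain k i x : (i <= NN k)%N -> I x -> q k i x <= q k 0 x.
Proof.
move=> iN Ix; elim: i iN => [//|i IH] iN.
apply: le_trans (IH (ltnW iN)); exact: q_step.
Qed.

Lemma qN k : q k (NN k) = q k.+1 0.
Proof.
apply/funext => x.
have eS : (SS k + NN k = SS k.+1 + 0)%N by rewrite addn0 /SS big_ord_recr.
by rewrite /q eS TmN Tm0 natr1.
Qed.


Lemma sg_arg k l i : 2 * (NN k)%:R * (Tm k i - k%:R) - 2 * l%:R - 2^-1 =
   2 * i%:R - 2 * l%:R - 2^-1.
Proof.
rewrite /Tm [k%:R + _]addrC addrK; congr (_ - _ - _).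
by rewrite -mulrA [(NN k)%:R * _]mulrCA mulfV ?mulr1 // gt_eqF // NN_gt0.
Qed.

Lemma sg_node k l i : sg k l (Tm k i) = if (l < i)%N then 1 else 0.
Proof.
rewrite /sg sg_arg; case: ifP => li.
  apply: stp1.
  have : (l.+1%:R <= i%:R :> R) by rewrite ler_nat.
  rewrite -natr1 => h1; lra.
apply: stp0.
have : (i%:R <= l%:R :> R) by rewrite ler_nat leqNgt li.
move=> h1; lra.
Qed.

Lemma G_eq k t x i : (i <= NN k)%N ->
  (forall l, (l < NN k)%N -> sg k l t = if (l < i)%N then 1 else 0) ->
  G k t x = q k i x.
Proof.
move=> iN hs; rewrite /G.
have -> : \sum_(l < NN k) sg k l t * (q k l x - q k l.+1 x) =
          \sum_(l < NN k) (if (l < i)%N then q k l x - q k l.+1 x else 0).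
  apply: eq_bigr => l _; rewrite hs //.
  by case: ifP; rewrite ?mul1r ?mul0r.
rewrite -big_mkcond /= -(big_ord_widen _ (fun l => q k l x - q k l.+1 x) iN).
rewrite (tele (fun l => q k l x)).
by rewrite opprB addrC subrK.
Qed.

Lemma G_node k i x : (i <= NN k)%N -> G k (Tm k i) x = q k i x.
Proof. by move=> iN; apply: G_eq => // l _; exact: sg_node. Qed.

Lemma sg_mono k l t s : t <= s -> sg k l t <= sg k l s.
Proof.
move=> ts; rewrite /sg; apply: stp_mono.
have N0 := NN_gt0 k.
have : 2 * (NN k)%:R * (t - k%:R) <= 2 * (NN k)%:R * (s - k%:R).
  by apply: ler_wpM2l; [rewrite mulr_ge0 // ltW | lra].
lra.
Qed.

Lemma G_mono k x t s : I x -> t <= s -> G k s x <= G k t x.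
Proof.
move=> Ix ts; rewrite /G lerD2l lerN2.
apply: ler_sum => l _; apply: ler_wpM2r.
  by rewrite subr_ge0; apply: q_step.
exact: sg_mono.
Qed.


Lemma trunc_bracket (t : R) : 0 <= t ->
  let k := Num.truncn t in
  let i := Num.truncn ((NN k)%:R * (t - k%:R)) in
  [/\ (i < NN k)%N, Tm k i <= t & t <= Tm k i.+1].
Proof.
move=> t0 k i.
have [kl ku] : k%:R <= t /\ t < k.+1%:R by have /andP[] := truncn_itv t0.
have N0 := NN_gt0 k.
have u0 : 0 <= (NN k)%:R * (t - k%:R) by rewrite mulr_ge0 // ?subr_ge0 // ltW.
have [il iu] : i%:R <= (NN k)%:R * (t - k%:R) /\ (NN k)%:R * (t - k%:R) < i.+1%:R.
  by have /andP[] := truncn_itv u0.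
have uN : (NN k)%:R * (t - k%:R) < (NN k)%:R.
  rewrite -[X in _ < X]mulr1 ltr_pM2l //; rewrite -natr1 in ku; lra.
split.
- by rewrite -(ltr_nat R); apply: le_lt_trans uN.
- rewrite /Tm -lerBrDl ler_pdivrMr // mulrC; lra.
- rewrite /Tm -lerBlDl ler_pdivlMr // mulrC; lra.
Qed.

Lemma g_bounds t x : 0 <= t -> I x -> h t x / 2 <= g t x /\ g t x <= 2 * h t x.
Proof.
move=> t0 Ix; rewrite /g.
have [iN l u] := trunc_bracket t t0.
set k := Num.truncn t in iN l u *; set i := Num.truncn _ in iN l u.
have ht := hpos _ _ t0 Ix.
have hi := hpos _ _ (Tm_ge0 k i) Ix.
have hi1 := hpos _ _ (Tm_ge0 k i.+1) Ix.
have m1 : 2/3 * h (Tm k i) x <= h (Tm k i.+1) x by exact: Mspec.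
have m2 : h (Tm k i.+1) x <= h t x by exact: hmono.
have m3 : h t x <= h (Tm k i) x by apply: hmono => //; exact: Tm_ge0.
have g1 : G k t x <= q k i x by rewrite -(G_node k i x (ltnW iN)); exact: G_mono.
have g2 : q k i.+1 x <= G k t x by rewrite -(G_node k i.+1 x iN); exact: G_mono.
have [_ qu] := q_spec k i x Ix.
have [ql _] := q_spec k i.+1 x Ix.
set a := aa (SS k + i) in qu; set b := aa (SS k + i.+1) in ql.
have a0 : 0 < a by exact: aa_pos.
have a1 : a <= 4^-1 by exact: aa_le.
have b0 : 0 < b by exact: aa_pos.
have b1 : b <= 4^-1 by exact: aa_le.
have ca : (1 + a) * (1 + a / 8) <= 5/4 * (33/32) by nra.
have cb : 31/32 <= (1 + b) * (1 - b / 8) by nra.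
split.
- have : (1 + b) * (1 - b / 8) * h (Tm k i.+1) x >= 31/32 * h (Tm k i.+1) x.
    by apply: ler_wpM2r => //; exact: ltW.
  nra.
- have : (1 + a) * (1 + a / 8) * h (Tm k i) x <= 5/4 * (33/32) * h (Tm k i) x.
    by apply: ler_wpM2r => //; exact: ltW.
  nra.
Qed.

Lemma Q_mono x l l' : I x -> (l <= l')%N -> q l' 0 x <= q l 0 x.
Proof.
move=> Ix; elim: l' => [|l' IH]; first by rewrite leqn0 => /eqP ->.
rewrite leq_eqVlt => /orP[/eqP -> //|]; rewrite ltnS => ll.
apply: le_trans (IH ll).
by rewrite -qN; apply: q_chain.
Qed.

Lemma g_mono x t s : I x -> 0 <= t -> t <= s -> g s x <= g t x.
Proof.
move=> Ix t0 ts; rewrite /g.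
have s0 : 0 <= s by exact: le_trans ts.
have km : (Num.truncn t <= Num.truncn s)%N by exact: le_truncn.
set k := Num.truncn t in km *; set m := Num.truncn s in km *.
have [kl ku] : k%:R <= t /\ t < k.+1%:R by have /andP[] := truncn_itv t0.
have [ml mu] : m%:R <= s /\ s < m.+1%:R by have /andP[] := truncn_itv s0.
move: km; rewrite leq_eqVlt => /orP[/eqP km|km].
  by rewrite -km; exact: G_mono.
have e1 : G m s x <= q m 0 x by rewrite -(G_node m 0 x (leq0n _)) Tm0; exact: G_mono.
have e2 : q k.+1 0 x <= G k t x.
  rewrite -qN -(G_node k (NN k) x (leqnn _)) TmN; apply: G_mono => //.
  by rewrite -natr1 in ku; exact: ltW.
apply: (le_trans e1); apply: le_trans e2; exact: Q_mono.
Qed.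


Lemma C1g_q k i : C1g (q k i).
Proof.
rewrite /q.
have a0 := aa_pos (SS k + i); have a1 := aa_le (SS k + i).
have [C _] := Pspec _ _ (Tm_ge0 k i) (divr_gt0 a0 (ltr0n _ 8)) (ltac:(lra) : aa (SS k + i) / 8 <= 1).
by apply: C1g_mul; [exact: C1g_cst|exact: C].
Qed.

Lemma C1g_sg k i : C1g (sg k i).
Proof.
rewrite /sg; apply: (C1g_comp C1g_stp).
apply: C1g_sub; last exact: C1g_cst.
apply: C1g_sub; last exact: C1g_cst.
apply: C1g_mul; first exact: C1g_cst.
by apply: C1g_sub; [exact: C1g_id|exact: C1g_cst].
Qed.

Lemma C1g_G k : C1g (fun z : R * 'rV[R]_n => G k z.1 z.2).
Proof.
rewrite /G; apply: C1g_sub; first exact: (C1g_snd (C1g_q k 0)).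
apply: C1g_sum => i; apply: C1g_mul; first exact: (C1g_fst (C1g_sg k i)).
apply: (C1g_snd (f := fun x => q k i x - q k i.+1 x)).
by apply: C1g_sub; exact: C1g_q.
Qed.


Lemma sg_zero k l t : (0 <= t - k%:R) -> (NN k)%:R * (t - k%:R) <= 4^-1 ->
  sg k l t = 0.
Proof.
move=> h0 h1; rewrite /sg; apply: stp0.
have l0 : (0 <= l%:R :> R) by [].
lra.
Qed.

Lemma sg_one k l t : (l < NN k)%N -> (NN k)%:R * (1 - (t - k%:R)) <= 4^-1 ->
  sg k l t = 1.
Proof.
move=> lN h1; rewrite /sg; apply: stp1.
have : (l.+1%:R <= (NN k)%:R :> R) by rewrite ler_nat.
rewrite -natr1 => h2.
have e : 2 * (NN k)%:R * (t - k%:R) = 2 * (NN k)%:R - 2 * ((NN k)%:R * (1 - (t - k%:R))).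
  by ring.
rewrite e; lra.
Qed.

Lemma g_local (z0 : R * 'rV[R]_n) : -1 < z0.1 ->
  exists F : R * 'rV[R]_n -> R, C1g F /\ \forall w \near z0, g w.1 w.2 = F w.
Proof.
case: z0 => t0 x0 /= t0p.
case Ek: (Num.truncn t0) => [|k'].
  exists (fun z => G 0 z.1 z.2); split; first exact: C1g_G.
  have t01 : t0 < 1.
    by have := truncn_le_nat t0 0; rewrite Ek leqnn => /esym.
  apply/nbhs_ballP; exists (1 - t0); first by rewrite /=; lra.
  move=> [t x] [/= bt _]; move: bt; rewrite /ball /= => bt.
  have : `|t0 - t| < 1 - t0 by exact: bt.
  rewrite ltr_norml => /andP[b1 b2].
  have : (Num.truncn t <= 0)%N by rewrite truncn_le_nat; lra.
  by rewrite leqn0 => /eqP tr; rewrite /g tr.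
have t01 : 1 <= t0 by rewrite -truncn_gt0 Ek.
have t00 : 0 <= t0 by lra.
have [kl ku] : (k'.+1)%:R <= t0 /\ t0 < (k'.+2)%:R.
  by have /andP[] := truncn_itv t00; rewrite Ek.
case: (ltP ((k'.+1)%:R) t0) => kt.
  exists (fun z => G k'.+1 z.1 z.2); split; first exact: C1g_G.
  have d1 : 0 < t0 - (k'.+1)%:R by lra.
  have d2 : 0 < (k'.+2)%:R - t0 by lra.
  apply/nbhs_ballP; exists ((t0 - (k'.+1)%:R) * ((k'.+2)%:R - t0)).
    exact: mulr_gt0.
  move=> [t x] [/= bt _]; move: bt; rewrite /ball /= => bt.
  have : `|t0 - t| < (t0 - (k'.+1)%:R) * ((k'.+2)%:R - t0) by exact: bt.
  rewrite ltr_norml => /andP[b1 b2].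
  have e2 : (k'.+2)%:R = (k'.+1)%:R + 1 :> R by rewrite -natr1.
  have tr : Num.truncn t = k'.+1.
    apply: truncn_def; apply/andP; split; nra.
  by rewrite /g tr.
have tk : t0 = (k'.+1)%:R by apply/eqP; rewrite eq_le kt kl.
exists (fun z => q k'.+1 0 z.2); split; first exact: (C1g_snd (C1g_q k'.+1 0)).
have N1 := NN_gt0 k'.+1; have N2 := NN_gt0 k'.
pose r1 : R := (4 * (NN k'.+1)%:R)^-1; pose r2 : R := (4 * (NN k')%:R)^-1.
have r10 : 0 < r1 by rewrite invr_gt0 mulr_gt0.
have r20 : 0 < r2 by rewrite invr_gt0 mulr_gt0.
have e1 : (NN k'.+1)%:R * r1 = 4^-1.
  by rewrite /r1 invfM mulrCA mulfV ?mulr1 // gt_eqF.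
have e2 : (NN k')%:R * r2 = 4^-1.
  by rewrite /r2 invfM mulrCA mulfV ?mulr1 // gt_eqF.
have N1' : 1 <= (NN k'.+1)%:R :> R by rewrite ler1n.
have N2' : 1 <= (NN k')%:R :> R by rewrite ler1n.
have r11 : r1 <= 4^-1 by nra.
have r21 : r2 <= 4^-1 by nra.
apply/nbhs_ballP; exists (r1 * r2); first exact: mulr_gt0.
move=> [t x] [/= bt _]; move: bt; rewrite /ball /= => bt.
have : `|t0 - t| < r1 * r2 by exact: bt.
rewrite ltr_norml tk => /andP[b1 b2].
have ek : (k'.+1)%:R = k'%:R + 1 :> R by rewrite -natr1.
case: (leP ((k'.+1)%:R) t) => kt2.
  have tr : Num.truncn t = k'.+1.
    apply: truncn_def; apply/andP; split => //.
    rewrite -natr1; nra.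
  rewrite /g tr; apply: G_eq => // l _.
  apply: sg_zero; first lra.
  have : (NN k'.+1)%:R * (t - (k'.+1)%:R) <= (NN k'.+1)%:R * r1.
    apply: ler_wpM2l; first lra.
    nra.
  lra.
have tr : Num.truncn t = k'.
  apply: truncn_def; apply/andP; split => //; nra.
rewrite /g tr -qN; apply: G_eq => // l lN.
rewrite lN; apply: sg_one => //.
have : (NN k')%:R * (1 - (t - k'%:R)) <= (NN k')%:R * r2.
  apply: ler_wpM2l; first lra.
  nra.
lra.
Qed.

End Construction.


Theorem lemma3 (R : realType) (n : nat) (h : R -> 'rV[R]_n -> R)
  (K : set 'rV[R]_n) :
  {within [set z : R * 'rV[R]_n | 0 <= z.1], continuous (fun z => h z.1 z.2)} ->
  (forall t x, 0 <= t -> 0 <= h t x) ->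
  closed K ->
  (forall t x, 0 <= t -> (h t x = 0 <-> K x)) ->
  (forall x t s, 0 <= t -> t <= s -> h s x <= h t x) ->
  forall I : set 'rV[R]_n, compact I -> I `&` K = set0 ->
  exists g : R -> 'rV[R]_n -> R,
    [/\ {within [set z : R * 'rV[R]_n | 0 <= z.1 /\ I z.2],
          continuous (fun z => g z.1 z.2)},
        (forall t x, 0 <= t -> I x -> 0 <= g t x),
        C1_on [set z : R * 'rV[R]_n | 0 <= z.1 /\ I° z.2] (fun z => g z.1 z.2),
        (forall t x, 0 <= t -> I x -> h t x / 2 <= g t x /\ g t x <= 2 * h t x) &
        (forall x t s, I x -> 0 <= t -> t <= s -> g s x <= g t x)].
Proof.
move=> hc hnn _ hK hmono I cI IK.
have hpos : forall t x, 0 <= t -> I x -> 0 < h t x.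
  move=> t x t0 Ix; rewrite lt0r hnn // andbT; apply/eqP => /(hK t x t0) Kx.
  have : (I `&` K) x by [].
  by rewrite IK.
have Pex : forall te : R * R, exists p : 'rV[R]_n -> R,
    0 <= te.1 -> 0 < te.2 -> te.2 <= 1 -> C1g p /\
    forall x, I x -> (1 - te.2) * h te.1 x <= p x /\ p x <= (1 + te.2) * h te.1 x.
  move=> [tau e] /=.
  case: (pselect (0 <= tau /\ 0 < e /\ e <= 1)) => [[t0 [e0 e1]]|nh]; last first.
    by exists (fun _ => 0) => t0 e0 e1; exfalso; apply: nh.
  have [p [Cp bp]] := @approx_x R n (h tau) I e cI (fun x Ix => hpos tau x t0 Ix)
     (fun c _ e' e'0 => @slice_near R n h tau c hc t0 e' e'0) e0 e1.
  by exists p.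
have [P HP] := choice Pex.
have Pspec : forall tau e, 0 <= tau -> 0 < e -> e <= 1 -> C1g (P (tau, e)) /\
     forall x, I x -> (1 - e) * h tau x <= P (tau, e) x /\ P (tau, e) x <= (1 + e) * h tau x.
  by move=> tau e t0 e0 e1; exact: (HP (tau, e) t0 e0 e1).
have Mex : forall k : nat, exists N : nat, forall i x, (i < N.+1)%N -> I x ->
    2/3 * h (k%:R + i%:R / N.+1%:R) x <= h (k%:R + i.+1%:R / N.+1%:R) x.
  move=> k.
  have [d [d0 hd]] := @mesh_delta R n h I k%:R hc hpos cI (ler0n _ _).
  exists (Num.truncn d^-1) => i x iN Ix.
  have Np : 0 < (Num.truncn d^-1).+1%:R :> R by rewrite ltr0n.
  have dN : d^-1 < (Num.truncn d^-1).+1%:R by exact: truncnS_gt.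
  have Nd : ((Num.truncn d^-1).+1%:R)^-1 <= d.
    rewrite -[X in _ <= X]invrK; apply: ltW; rewrite ltf_pV2 // ?posrE ?invr_gt0 //.
  set N := (Num.truncn d^-1).+1 in Np dN Nd iN *.
  have iN' : (i%:R <= N%:R :> R) by rewrite ler_nat ltnW.
  have i0 : (0 <= i%:R :> R) by [].
  have e1 : i.+1%:R / N%:R = i%:R / N%:R + N%:R^-1 :> R.
    by rewrite -natr1 mulrDl mul1r.
  have f1 : i%:R / N%:R <= 1 :> R by rewrite ler_pdivrMr // mul1r.
  have f0 : 0 <= i%:R / N%:R :> R by rewrite divr_ge0.
  have Ni0 : 0 <= N%:R^-1 :> R by rewrite invr_ge0 ltW.
  apply: hd => //.
  - lra.
  - lra.
  - rewrite e1; lra.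
  - rewrite e1; lra.
have [M HM] := choice Mex.
have Mspec : forall k i x, (i < (M k).+1)%N -> I x ->
     2/3 * h (k%:R + i%:R / (M k).+1%:R) x <= h (k%:R + i.+1%:R / (M k).+1%:R) x.
  by move=> k i x; exact: HM.
have oU : open [set z : R * 'rV[R]_n | -1 < z.1].
  have -> : [set z : R * 'rV[R]_n | -1 < z.1] = fst @^-1` [set t : R | -1 < t] by [].
  apply: open_comp; last exact: open_gt.
  by move=> z _; exact: cvg_fst.
have loc := @C1_local R _ [set z : R * 'rV[R]_n | -1 < z.1]
   (fun z => g P M z.1 z.2) oU (fun z hz => @g_local R n h I P M Pspec z hz).
have [_ dU cU] := loc.
exists (g P M); split.
- apply: continuous_in_subspaceT => z /set_mem [z0 _].
  apply: differentiable_continuous; apply: dU => /=; lra.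
- move=> t x t0 Ix; have [b _] := @g_bounds R n h I P M hmono hpos Pspec Mspec t x t0 Ix.
  have := hnn t x t0; lra.
- exists [set z : R * 'rV[R]_n | -1 < z.1], (fun z => g P M z.1 z.2); split => //.
  by move=> z [z0 _] /=; lra.
- exact: (@g_bounds R n h I P M hmono hpos Pspec Mspec).
- exact: (@g_mono R n h I P M hmono hpos Pspec).
Qed.
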